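(* Let $H=([n],E)$ be a hypergraph and $F\ne F'$ two edges. If $F\cap F'=\emptyset$ then $Q_F\cap Q_{F'}$ is homeomorphic to a sphere of dimension $n-\#F-\#F'$; if $F\cap F'\ne\emptyset$ then $Q_F\cap Q_{F'}$ is homeomorphic to a sphere of dimension $n-\#(F\cup F')-1$. In particular, $Q_F\cap Q_{F'}$ has no nonempty face if and only if $F\cup F'=[n]$ and $F\cap F'\neq\emptyset$.
   Context: A hypergraph $H=([n],E)$ has edges that are nonempty subsets of $[n]$; standing assumptions: every vertex in some edge, no edge of size 1, no edge properly contained in another. The coloring complex $\Delta_H$ has as faces the ordered set partitions $B_1|\cdots|B_r$ of $[n]$ into nonempty blocks (of dimension $r-2$) with at least one block containing an edge; a face is contained in another if it is obtained from it by repeatedly merging adjacent blocks. For $F\in E$, the edge sphere $Q_F$ is the subcomplex of faces having a block containing $F$. A sphere of dimension $-1$ means the empty space (only the empty face). *)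

(* Defs.v *)
From Stdlib Require Import Reals.
From mathcomp Require Import all_boot.

Set Implicit Arguments.
Unset Strict Implicit.
Unset Printing Implicit Defensive.

Definition is_hypergraph (n : nat) (E : {set {set 'I_n}}) : Prop :=
  [/\ (forall e, e \in E -> e != set0),
      (forall e, e \in E -> #|e| != 1),
      (forall v : 'I_n, exists2 e, e \in E & v \in e) &
      (forall e e', e \in E -> e' \in E -> ~~ (e \proper e'))].

Definition osp (n : nat) (P : seq {set 'I_n}) : Prop :=
  (forall B, B \in P -> B != set0) /\
  (forall i : 'I_n, count (fun B : {set 'I_n} => i \in B) P = 1).

Definition coloring_face (n : nat) (E : {set {set 'I_n}}) (P : seq {set 'I_n}) : Prop :=
  osp P /\ has (fun B : {set 'I_n} => [exists e in E, e \subset B]) P.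

Definition edge_sphere_face (n : nat) (E : {set {set 'I_n}}) (F : {set 'I_n})
  (P : seq {set 'I_n}) : Prop :=
  coloring_face E P /\ has (fun B : {set 'I_n} => F \subset B) P.

Definition blk (n : nat) (P : seq {set 'I_n}) (i : 'I_n) : nat :=
  find (fun B : {set 'I_n} => i \in B) P.

Definition Rsum (k : nat) (f : 'I_k -> R) : R := \big[Rplus/R0]_(i < k) f i.

Definition dist (k : nat) (x y : 'I_k -> R) : R :=
  sqrt (Rsum (fun i => Rmult (Rminus (x i) (y i)) (Rminus (x i) (y i)))).

(* The point x lies in the relatively open cell of the ordered set partition P
   in the braid fan: x is constant on blocks and strictly increasing from
   block to block. *)
Definition in_cell (n : nat) (P : seq {set 'I_n}) (x : 'I_n -> R) : Prop :=
  forall i j : 'I_n, Rle (x i) (x j) <-> (blk P i <= blk P j)%N.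

(* The (n-2)-sphere carrying the Coxeter complex of type A_{n-1}:
   unit vectors in the hyperplane sum x_i = 0. *)
Definition coxeter_sphere (n : nat) (x : 'I_n -> R) : Prop :=
  Rsum x = R0 /\ Rsum (fun i => Rmult (x i) (x i)) = R1.

(* Geometric realization of a subcomplex K (given by its set of faces) of
   the Coxeter complex: union of the open cells of its faces. *)
Definition realization (n : nat) (K : seq {set 'I_n} -> Prop) (x : 'I_n -> R) : Prop :=
  coxeter_sphere x /\ exists P, K P /\ in_cell P x.

Definition continuous_on (m k : nat) (A : ('I_m -> R) -> Prop) (f : ('I_m -> R) -> ('I_k -> R)) : Prop :=
  forall x, A x -> forall eps, Rlt R0 eps ->
    exists delta, Rlt R0 delta /\
      forall y, A y -> Rlt (dist y x) delta -> Rlt (dist (f y) (f x)) eps.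

Definition homeomorphic (m k : nat) (A : ('I_m -> R) -> Prop) (B : ('I_k -> R) -> Prop) : Prop :=
  exists (f : ('I_m -> R) -> ('I_k -> R)) (g : ('I_k -> R) -> ('I_m -> R)),
    (forall x, A x -> B (f x)) /\
    (forall y, B y -> A (g y)) /\
    (forall x, A x -> g (f x) = x) /\
    (forall y, B y -> f (g y) = y) /\
    continuous_on A f /\
    continuous_on B g.

(* Unit sphere in R^m, i.e. the sphere of dimension m-1
   (for m = 0 it is empty: the sphere of dimension -1). *)
Definition unit_sphere (m : nat) (y : 'I_m -> R) : Prop :=
  Rsum (fun i => Rmult (y i) (y i)) = R1.
Arguments unit_sphere m y : clear implicits.

(* Main.v *)
Require Import Defs.
From Stdlib Require Import Reals.
From mathcomp Require Import all_boot all_order all_algebra.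
From mathcomp Require Import Rstruct.
From mathcomp.algebra_tactics Require Import ring lra.
From Stdlib Require Import FunctionalExtensionality.
From mathcomp Require Import zify.
Import GRing.Theory Num.Theory Order.TTheory.
Local Open Scope ring_scope.
Set Implicit Arguments. Unset Strict Implicit.

Lemma RsumE k (f : 'I_k -> R) : Rsum f = \sum_(i < k) f i.
Proof. by []. Qed.

Lemma cpt_eps (g : R -> R) t : continuity_pt g t ->
  forall e : R, 0 < e -> exists2 d : R, 0 < d & forall u, `|u - t| < d -> `|g u - g t| < e.
Proof.
move=> H e /RltP e0; have [d [/RltP d0 Hd]] := H e e0.
exists d => // u ud; case: (eqVneq u t) => [->|ut]; first by rewrite subrr normr0; apply/RltP.
have ut' : t <> u by move=> E; move: ut; rewrite E eqxx.
have D : Rlt (R_dist u t) d by rewrite /R_dist RabsE; apply/RltP.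
have := Hd u (conj (conj I ut') D).
by rewrite /= /R_dist RabsE => /RltP.
Qed.

Definition ccont {n} (A : ('I_n -> R) -> Prop) (h : ('I_n -> R) -> R) :=
 forall x, A x -> forall e : R, 0 < e -> exists2 d : R, 0 < d &
   forall y, A y -> (forall i, `|y i - x i| < d) -> `|h y - h x| < e.

Lemma ccont_ext n A (h1 h2 : ('I_n -> R) -> R) : (forall x, h1 x = h2 x) -> ccont A h1 -> ccont A h2.
Proof.
move=> E H x Ax e e0; have [d d0 Hd] := H x Ax e e0; exists d => // y Ay Hy.
by rewrite -!E; apply: Hd.
Qed.

Lemma ccont_const n A (c : R) : ccont (n:=n) A (fun _ => c).
Proof. by move=> x _ e e0; exists 1 => // y _ _; rewrite subrr normr0. Qed.

Lemma ccont_coord n A (i : 'I_n) : ccont A (fun x => x i).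
Proof. by move=> x _ e e0; exists e => // y _ H; apply: H. Qed.

Lemma ccont_add n A (h1 h2 : ('I_n -> R) -> R) : ccont A h1 -> ccont A h2 ->
  ccont A (fun x => h1 x + h2 x).
Proof.
move=> H1 H2 x Ax e e0.
have e20 : 0 < e / 2 by rewrite divr_gt0.
have [d1 d10 Hd1] := H1 x Ax _ e20; have [d2 d20 Hd2] := H2 x Ax _ e20.
exists (Num.min d1 d2); first by rewrite lt_min d10 d20.
move=> y Ay Hy.
have K1 : `|h1 y - h1 x| < e / 2 by apply: Hd1 => // i; have := Hy i; rewrite lt_min => /andP[].
have K2 : `|h2 y - h2 x| < e / 2 by apply: Hd2 => // i; have := Hy i; rewrite lt_min => /andP[].
rewrite (_ : h1 y + h2 y - (h1 x + h2 x) = (h1 y - h1 x) + (h2 y - h2 x)); last by ring.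
apply: (le_lt_trans (ler_normD _ _)).
by rewrite [e](splitr e) ltrD.
Qed.

Lemma ccont_comp n A (h : ('I_n -> R) -> R) (g : R -> R) :
  (forall x, A x -> continuity_pt g (h x)) -> ccont A h -> ccont A (fun x => g (h x)).
Proof.
move=> Hg H x Ax e e0.
have [d1 d10 Hd1] := cpt_eps (Hg x Ax) e0.
have [d d0 Hd] := H x Ax _ d10.
by exists d => // y Ay Hy; apply: Hd1; apply: Hd.
Qed.

Lemma ccont_scale n A (h : ('I_n -> R) -> R) (c : R) : ccont A h -> ccont A (fun x => c * h x).
Proof.
move=> H; apply: (ccont_comp (g := fun t => c * t)) => // x _.
apply: (continuity_pt_scal id); exact: derivable_continuous_pt (derivable_pt_id _).
Qed.

Lemma ccont_sq n A (h : ('I_n -> R) -> R) : ccont A h -> ccont A (fun x => h x ^+ 2).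
Proof.
move=> H; apply: (ccont_comp (g := fun t => t ^+ 2)) => // x _.
have C : continuity_pt Ranalysis1.id (h x) by apply: derivable_continuous_pt; apply: derivable_pt_id.
exact: (continuity_pt_mult _ _ _ C C).
Qed.

Lemma ccont_mul n A (h1 h2 : ('I_n -> R) -> R) : ccont A h1 -> ccont A h2 ->
  ccont A (fun x => h1 x * h2 x).
Proof.
move=> H1 H2.
apply: (ccont_ext (h1 := fun x => (4%:R)^-1 * ((h1 x + h2 x) ^+ 2 + (-1) * ((h1 x + (-1) * h2 x) ^+ 2)))).
  by move=> x; field.
apply: ccont_scale; apply: ccont_add; first by apply: ccont_sq; apply: ccont_add.
by apply: ccont_scale; apply: ccont_sq; apply: ccont_add => //; apply: ccont_scale.
Qed.

Lemma ccont_inv n A (h : ('I_n -> R) -> R) : (forall x, A x -> h x != 0) -> ccont A h ->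
  ccont A (fun x => (h x)^-1).
Proof.
move=> Hn H; apply: (ccont_comp (g := fun t => t^-1)) => // x Ax.
apply: (continuity_pt_inv id); first exact: derivable_continuous_pt (derivable_pt_id _).
by apply/eqP; apply: Hn.
Qed.

Lemma ccont_sqrt n A (h : ('I_n -> R) -> R) : (forall x, A x -> 0 <= h x) -> ccont A h ->
  ccont A (fun x => Num.sqrt (h x)).
Proof.
move=> Hn H; apply: (ccont_ext (h1 := fun x => sqrt (h x))); first by move=> x; rewrite RsqrtE.
apply: (ccont_comp (g := sqrt)) => // x Ax.
by apply: continuity_pt_sqrt; apply/RleP; apply: Hn.
Qed.

Lemma ccont_sum n A (I : Type) (s : seq I) (F : I -> ('I_n -> R) -> R) :
  (forall i, ccont A (F i)) -> ccont A (fun x => \sum_(i <- s) F i x).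
Proof.
move=> H; elim: s => [|a s IH].
  by apply: (ccont_ext (h1 := fun _ => 0)); [move=> x; rewrite big_nil | apply: ccont_const].
apply: (ccont_ext (h1 := fun x => F a x + \sum_(i <- s) F i x)); first by move=> x; rewrite big_cons.
exact: ccont_add.
Qed.

Lemma finmin (T : finType) (P : T -> R -> Prop) :
  (forall j d d', 0 < d' -> d' <= d -> P j d -> P j d') ->
  (forall j, exists2 d, 0 < d & P j d) -> exists2 d, 0 < d & forall j, P j d.
Proof.
move=> Hm H.
suff [d d0 Hd] : exists2 d, 0 < d & forall j, j \in enum T -> P j d.
  by exists d => // j; apply: Hd; rewrite mem_enum.
elim: (enum T) => [|a s [d d0 Hd]]; first by exists 1.
have [da da0 Ha] := H a.
exists (Num.min d da); first by rewrite lt_min d0 da0.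
move=> j; rewrite inE => /orP[/eqP->|js].
  by apply: (Hm a da) => //; [rewrite lt_min d0 da0 | rewrite ge_min lexx orbT].
by apply: (Hm j d); [rewrite lt_min d0 da0 | rewrite ge_min lexx | apply: Hd].
Qed.

Definition nrm k (u : 'I_k -> R) := Num.sqrt (\sum_i u i ^+ 2).

Lemma distE k (x y : 'I_k -> R) : Defs.dist x y = nrm (fun i => x i - y i).
Proof. by rewrite /Defs.dist RsqrtE RsumE /nrm; apply: congr1; apply: eq_bigr => i _; rewrite expr2. Qed.

Lemma sumsq_ge0 k (u : 'I_k -> R) : 0 <= \sum_i u i ^+ 2.
Proof. by apply: sumr_ge0 => i _; rewrite sqr_ge0. Qed.

Lemma coord_le_nrm k (u : 'I_k -> R) i : `|u i| <= nrm u.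
Proof.
rewrite -sqrtr_sqr /nrm; apply: ler_wsqrtr.
rewrite (bigD1 i) //= lerDl; apply: sumr_ge0 => j _; exact: sqr_ge0.
Qed.

Lemma cont_of_ccont m k (A : ('I_m -> R) -> Prop) (f : ('I_m -> R) -> 'I_k -> R) :
  (forall j, ccont A (fun x => f x j)) -> continuous_on A f.
Proof.
move=> H x Ax eps /RltP eps0.
pose e' := eps / (k%:R + 1).
have k1 : 0 < k%:R + 1 :> R by rewrite ltr_wpDl.
have e'0 : 0 < e' by rewrite divr_gt0.
pose P := fun j d => forall y, A y -> (forall i, `|y i - x i| < d) ->
   `|f y j - f x j| < e'.
have Hm : forall j d1 d2, 0 < d2 -> d2 <= d1 -> P j d1 -> P j d2.
  move=> j d1 d2 d20 d21 HP y Ay Hy; apply: HP => // i; exact: lt_le_trans (Hy i) d21.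
have [d d0 Hd] := @finmin _ P Hm (fun j => H j x Ax e' e'0).
exists d; split; first exact/RltP.
move=> y Ay /RltP dyx.
have Hy : forall i, `|y i - x i| < d.
  by move=> i; apply: le_lt_trans (coord_le_nrm (fun i => y i - x i) i) _; rewrite -distE.
have Hj := fun j => Hd j y Ay Hy.
apply/RltP; rewrite distE /nrm.
have -> : eps = Num.sqrt (eps ^+ 2) by rewrite sqrtr_sqr ger0_norm // ltW.
rewrite ltr_sqrt; last by rewrite exprn_gt0.
apply: (le_lt_trans (y := \sum_(j < k) e' ^+ 2)).
  apply: ler_sum => j _; rewrite -[X in X <= _]ger0_norm ?sqr_ge0 // normrX.
  by rewrite lerXn2r ?nnegrE ?normr_ge0 ?ltW // ltW.
rewrite sumr_const card_ord.
have E : eps = e' * (k%:R + 1) by rewrite /e' divfK // gt_eqF.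
rewrite E -mulr_natr.
have kk : 0 <= k%:R :> R by [].
nra.
Qed.

Lemma nrm_ge0 k (u : 'I_k -> R) : 0 <= nrm u.
Proof. exact: sqrtr_ge0. Qed.

Lemma nrm_scale k (u : 'I_k -> R) c : nrm (fun i => c * u i) = `|c| * nrm u.
Proof.
rewrite /nrm -sqrtr_sqr -sqrtrM ?sqr_ge0 //; congr Num.sqrt.
by rewrite mulr_sumr; apply: eq_bigr => i _; rewrite exprMn.
Qed.

Lemma nrm0P k (u : 'I_k -> R) : nrm u = 0 -> forall i, u i = 0.
Proof.
move=> H i; apply/eqP; rewrite -normr_eq0 eq_le normr_ge0 andbT -H.
exact: coord_le_nrm.
Qed.

Lemma nrm_sq k (u : 'I_k -> R) : nrm u ^+ 2 = \sum_i u i ^+ 2.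
Proof. by rewrite /nrm sqr_sqrtr // sumsq_ge0. Qed.

Lemma sumsq_normalize k (u : 'I_k -> R) : nrm u != 0 ->
  \sum_i ((nrm u)^-1 * u i) ^+ 2 = 1.
Proof.
move=> H; under eq_bigr do rewrite exprMn.
by rewrite -mulr_sumr -nrm_sq exprVn mulVf // expf_neq0.
Qed.

Lemma coxE n (x : 'I_n -> R) : coxeter_sphere x <-> (\sum_i x i = 0 /\ \sum_i x i ^+ 2 = 1).
Proof.
rewrite /coxeter_sphere !RsumE.
by have -> : \sum_i x i * x i = \sum_i x i ^+ 2 by apply: eq_bigr => i _; rewrite expr2.
Qed.

Lemma usE m (y : 'I_m -> R) : unit_sphere m y <-> \sum_i y i ^+ 2 = 1.
Proof.
rewrite /unit_sphere !RsumE.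
by have -> : \sum_i y i * y i = \sum_i y i ^+ 2 by apply: eq_bigr => i _; rewrite expr2.
Qed.

Lemma homeo_ext m k (A A' : ('I_m -> R) -> Prop) (B : ('I_k -> R) -> Prop) :
  (forall x, A x <-> A' x) -> homeomorphic A' B -> homeomorphic A B.
Proof.
move=> E [f [g [H1 [H2 [H3 [H4 [H5 H6]]]]]]].
exists f, g; split; [|split; [|split; [|split; [|split]]]].
- by move=> x /E; apply: H1.
- by move=> y /H2 /E.
- by move=> x /E; apply: H3.
- exact: H4.
- move=> x /E Ax e e0; have [d [d0 Hd]] := H5 x Ax e e0.
  by exists d; split => // y /E; apply: Hd.
- move=> y By e e0; have [d [d0 Hd]] := H6 y By e e0.
  by exists d; split => // x Bx dx; apply/E; apply: Hd.
Qed.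

Lemma homeo_gen n m (V : ('I_n -> R) -> Prop) (phi : ('I_n -> R) -> 'I_m -> R)
  (psi : ('I_m -> R) -> 'I_n -> R) :
 (forall x c, V x -> V (fun i => c * x i)) ->
 (forall x, V x -> \sum_i x i = 0) ->
 (forall c x, phi (fun i => c * x i) = fun j => c * phi x j) ->
 (forall c y, psi (fun j => c * y j) = fun i => c * psi y i) ->
 (forall x, V x -> psi (phi x) = x) ->
 (forall y, phi (psi y) = y) ->
 (forall y, V (psi y)) ->
 (forall j A, ccont A (fun x => phi x j)) ->
 (forall i B, ccont B (fun y => psi y i)) ->
 homeomorphic (fun x => coxeter_sphere x /\ V x) (unit_sphere m).
Proof.
move=> Vs Vsum phiZ psiZ psiphi phipsi Vpsi phic psic.
pose f := fun x => fun j => (nrm (phi x))^-1 * phi x j.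
pose g := fun y => fun i => (nrm (psi y))^-1 * psi y i.
have nA : forall x, coxeter_sphere x /\ V x -> nrm (phi x) != 0.
  move=> x [/coxE [_ s1] Vx]; apply/eqP => /nrm0P H0.
  have E : phi x = fun j => 0 * phi x j.
    by apply: functional_extensionality => j; rewrite mul0r H0.
  have := psiphi x Vx; rewrite E psiZ => Ex.
  move: s1; rewrite -Ex.
  by under eq_bigr do rewrite mul0r expr0n /=; rewrite big1 // => /eqP; rewrite eq_sym oner_eq0.
have nB : forall y, unit_sphere m y -> nrm (psi y) != 0.
  move=> y /usE s1; apply/eqP => /nrm0P H0.
  have E : psi y = fun j => 0 * psi y j.
    by apply: functional_extensionality => j; rewrite mul0r H0.
  have := phipsi y; rewrite E phiZ => Ex.
  move: s1; rewrite -Ex.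
  by under eq_bigr do rewrite mul0r expr0n /=; rewrite big1 // => /eqP; rewrite eq_sym oner_eq0.
exists f, g; split; [|split; [|split; [|split; [|split]]]].
- by move=> x Ax; apply/usE; apply: sumsq_normalize; apply: nA.
- move=> y By; split; last exact: Vs.
  apply/coxE; split; last exact: sumsq_normalize (nB y By).
  by rewrite -mulr_sumr Vsum // mulr0.
- move=> x Ax; have nx := nA x Ax.
  have [/coxE [_ s1] Vx] := Ax.
  have n1 : nrm x = 1 by rewrite /nrm s1 sqrtr1.
  rewrite /g /f psiZ psiphi // nrm_scale n1 mulr1 ger0_norm ?invr_ge0 ?nrm_ge0 //.
  apply: functional_extensionality => i; rewrite invrK mulrA mulfV ?mul1r //.
- move=> y By; have ny := nB y By.
  have n1 : nrm y = 1 by rewrite /nrm (proj1 (usE y) By) sqrtr1.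
  rewrite /g /f phiZ phipsi // nrm_scale n1 mulr1 ger0_norm ?invr_ge0 ?nrm_ge0 //.
  apply: functional_extensionality => i; rewrite invrK mulrA mulfV ?mul1r //.
- apply: cont_of_ccont => j; rewrite /f.
  apply: ccont_mul; last exact: phic.
  apply: ccont_inv; first by move=> x Ax; apply: nA.
  apply: ccont_sqrt; first by move=> x _; apply: sumsq_ge0.
  by apply: ccont_sum => l; apply: ccont_sq; apply: phic.
- apply: cont_of_ccont => j; rewrite /g.
  apply: ccont_mul; last exact: psic.
  apply: ccont_inv; first by move=> x Ax; apply: nB.
  apply: ccont_sqrt; first by move=> x _; apply: sumsq_ge0.
  by apply: ccont_sum => l; apply: ccont_sq; apply: psic.
Qed.

Lemma sum_delta (I : finType) (a : I) (F : I -> R) : \sum_i (if i == a then F i else 0) = F a.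
Proof. by rewrite -big_mkcond big_pred1_eq. Qed.

Lemma sum_in (I : finType) (A : {pred I}) (c : R) : \sum_i (if i \in A then c else 0) = c *+ #|A|.
Proof. by rewrite -big_mkcond sumr_const. Qed.

Lemma sum_enum n (C : {set 'I_n}) f0 m (G : 'I_n -> R) : f0 \notin C -> (#|C| <= m)%N ->
 \sum_(l < m) (if nth f0 (enum C) l \in C then G (nth f0 (enum C) l) else 0) = \sum_(i in C) G i.
Proof.
move=> f0C Cm.
rewrite -(big_mkord xpredT (fun l => if nth f0 (enum C) l \in C then G (nth f0 (enum C) l) else 0)).
rewrite (big_cat_nat _ (n:=#|C|)) //=.
rewrite [X in _ + X]big1_seq ?addr0; last first.
  move=> l /andP[_]; rewrite mem_index_iota => /andP[h _].
  by rewrite nth_default ?(negbTE f0C) // -cardE.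
rewrite -big_enum (big_nth f0) [X in \big[_/_]_(0 <= _ < X | _) _]cardE.
apply: eq_big_nat => l /andP[_ h].
by have := mem_nth f0 (h : (l < size (enum C))%N); rewrite mem_enum => ->.
Qed.

Lemma sum_exch n m (C : {set 'I_n}) (c : 'I_m -> 'I_n) (y : 'I_m -> R) :
  \sum_i (if i \in C then \sum_(l < m) (if c l == i then y l else 0) else 0) =
  \sum_(l < m) (if c l \in C then y l else 0).
Proof.
have -> : \sum_i (if i \in C then \sum_(l < m) (if c l == i then y l else 0) else 0) =
   \sum_i \sum_(l < m) (if i \in C then (if c l == i then y l else 0) else 0).
  by apply: eq_bigr => i _; case: ifP => // _; rewrite big1.
rewrite exchange_big; apply: eq_bigr => l _.
rewrite -(sum_delta (c l) (fun _ => if c l \in C then y l else 0)).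
by apply: eq_bigr => i _; case: (eqVneq i (c l)) => [->|ne] //; case: ifP.
Qed.

Lemma sum_scale m (P : 'I_m -> bool) (y : 'I_m -> R) c :
  \sum_l (if P l then c * y l else 0) = c * \sum_l (if P l then y l else 0).
Proof. by rewrite mulr_sumr; apply: eq_bigr => l _; case: ifP; rewrite ?mulr0. Qed.

Lemma ccont_if m A (P : 'I_m -> bool) (l : 'I_m) :
  ccont A (fun y : 'I_m -> R => if P l then y l else 0).
Proof. by case: (P l); [apply: ccont_coord | apply: ccont_const]. Qed.

Lemma ccont_sumif m A (P : 'I_m -> bool) :
  ccont A (fun y : 'I_m -> R => \sum_l (if P l then y l else 0)).
Proof. by apply: ccont_sum => l; apply: ccont_if. Qed.

Definition constOn n (S : {set 'I_n}) (x : 'I_n -> R) :=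
  forall i j, i \in S -> j \in S -> x i = x j.

Lemma blk_const n (P : seq {set 'I_n}) (B : {set 'I_n}) : osp P -> B \in P ->
  forall i j, i \in B -> j \in B -> blk P i = blk P j.
Proof.
move=> [_ Hc] HB; move: Hc; case/splitPr: HB => p1 p2 Hc.
suff E : forall i, i \in B -> blk (p1 ++ B :: p2) i = size p1.
  by move=> i j iB jB; rewrite !E.
move=> i iB; rewrite /blk find_cat.
have := Hc i; rewrite count_cat /= iB => H.
have -> : has (fun B0 : {set 'I_n} => i \in B0) p1 = false.
  by apply/negbTE; rewrite has_count; move: H => /=; lia.
by rewrite /= addn0.
Qed.

Lemma const_of_face n (P : seq {set 'I_n}) (B S : {set 'I_n}) x : osp P -> in_cell P x -> B \in P ->
  S \subset B -> constOn S x.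
Proof.
move=> Ho Hc HB /subsetP SB i j iS jS.
have e := blk_const Ho HB (SB i iS) (SB j jS).
apply: Rle_antisym; [apply/(Hc i j) | apply/(Hc j i)]; by rewrite e.
Qed.

Definition svals n (x : 'I_n -> R) :=
  sort (fun a b : R => a <= b) (undup [seq x i | i <- enum 'I_n]).
Definition mkP n (x : 'I_n -> R) := [seq [set i | x i == v] | v <- svals x].

Lemma svals_uniq n (x : 'I_n -> R) : uniq (svals x).
Proof. by rewrite sort_uniq undup_uniq. Qed.

Lemma svals_mem n (x : 'I_n -> R) i : x i \in svals x.
Proof. by rewrite mem_sort mem_undup; apply: map_f; rewrite mem_enum. Qed.

Lemma svals_memP n (x : 'I_n -> R) v : v \in svals x -> exists i, v = x i.
Proof. by rewrite mem_sort mem_undup => /mapP [i _ ->]; exists i. Qed.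

Lemma svals_sorted n (x : 'I_n -> R) : sorted (fun a b : R => a <= b) (svals x).
Proof. by apply: sort_sorted => a b; apply: le_total. Qed.

Lemma mkP_osp n (x : 'I_n -> R) : osp (mkP x).
Proof.
split.
  move=> B /mapP [v /svals_memP [i ->] ->]; apply/set0Pn; exists i; by rewrite inE.
move=> i; rewrite count_map.
rewrite (eq_count (a2 := pred1 (x i))); last by move=> v /=; rewrite inE eq_sym.
by rewrite count_uniq_mem ?svals_uniq // svals_mem.
Qed.

Lemma mkP_blk n (x : 'I_n -> R) i : blk (mkP x) i = index (x i) (svals x).
Proof.
rewrite /blk /mkP find_map /index; apply: eq_find => v /=; by rewrite inE eq_sym.
Qed.

Lemma mkP_cell n (x : 'I_n -> R) : in_cell (mkP x) x.
Proof.
move=> i j; rewrite !mkP_blk; split.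
  move/RleP => le; case: (leqP (index (x i) (svals x)) (index (x j) (svals x))) => // lt.
  have le2 := sorted_ltn_index le_trans (svals_sorted x) _ _ (svals_mem x j) (svals_mem x i) lt.
  have E : x i = x j by apply/eqP; rewrite eq_le le le2.
  by move: lt; rewrite E ltnn.
move=> le; apply/RleP.
exact: (sorted_leq_index le_trans lexx (svals_sorted x) _ _ (svals_mem x i) (svals_mem x j) le).
Qed.

Lemma mkP_face n (E : {set {set 'I_n}}) (F : {set 'I_n}) f0 x :
  F \in E -> f0 \in F -> constOn F x -> edge_sphere_face E F (mkP x).
Proof.
move=> HF f0F Hc.
have B : [set i | x i == x f0] \in mkP x by apply: map_f; apply: svals_mem.
have FB : F \subset [set i | x i == x f0].
  by apply/subsetP => i iF; rewrite inE (Hc i f0 iF f0F).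
split; last by apply/hasP; exists [set i | x i == x f0].
split; first exact: mkP_osp.
by apply/hasP; exists [set i | x i == x f0] => //; apply/existsP; exists F; rewrite HF.
Qed.

Lemma face_block n (E : {set {set 'I_n}}) (F : {set 'I_n}) P :
  edge_sphere_face E F P -> osp P /\ exists2 B, B \in P & F \subset B.
Proof. by move=> [[Ho _] /hasP [B BP FB]]; split => //; exists B. Qed.

Lemma real_char n (E : {set {set 'I_n}}) (F F' : {set 'I_n}) f0 f0' x :
  F \in E -> F' \in E -> f0 \in F -> f0' \in F' ->
  realization (fun P => edge_sphere_face E F P /\ edge_sphere_face E F' P) x <->
  (coxeter_sphere x /\ (\sum_i x i = 0 /\ constOn F x /\ constOn F' x)).
Proof.
move=> HF HF' f0F f0F'; split.
  move=> [Cx [P [[H1 H2] Hc]]]; split => //; split; first by case/coxE: Cx.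
  have [Ho [B BP FB]] := face_block H1; have [_ [B' BP' FB']] := face_block H2.
  split; [exact: const_of_face Ho Hc BP FB | exact: const_of_face Ho Hc BP' FB'].
move=> [Cx [_ [c1 c2]]]; split => //; exists (mkP x); split; last exact: mkP_cell.
by split; [apply: mkP_face f0F c1 | apply: mkP_face f0F' c2].
Qed.

Lemma two_block n (A : {set 'I_n}) : A != set0 -> ~: A != set0 -> osp [:: A; ~: A].
Proof.
move=> A0 CA0; split.
  by move=> B; rewrite !inE => /orP[/eqP->|/eqP->].
by move=> i /=; rewrite inE; case: (i \in A).
Qed.

Lemma two_face n (E : {set {set 'I_n}}) (F G A : {set 'I_n}) : F \in E ->
  A != set0 -> ~: A != set0 -> F \subset A -> (G \subset A) || (G \subset ~: A) ->
  edge_sphere_face E F [:: A; ~: A] /\ edge_sphere_face E G [:: A; ~: A].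
Proof.
move=> HF A0 CA0 FA GA.
have CF : coloring_face E [:: A; ~: A].
  split; first exact: two_block.
  by rewrite /= orbF; apply/orP; left; apply/existsP; exists F; rewrite HF.
by split; split => //=; rewrite ?FA // orbF.
Qed.

Lemma has_in n (p : seq {set 'I_n}) k C : C \in p -> k \in C ->
  count (fun B : {set 'I_n} => k \in B) p != 0%N.
Proof. by move=> Cp kC; rewrite -lt0n -has_count; apply/hasP; exists C. Qed.

Lemma part3 n (E : {set {set 'I_n}}) (F F' : {set 'I_n}) : F \in E -> F' \in E ->
  F != set0 -> F' != set0 ->
  ((forall P, edge_sphere_face E F P -> edge_sphere_face E F' P -> size P = 1%N)
         <-> (F :|: F' = setT /\ F :&: F' != set0)).
Proof.
move=> HF HF' F0 F'0; split.
  move=> H.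
  have I : F :&: F' != set0.
    apply/negP => /eqP I0.
    have F'C : F' \subset ~: F.
      apply/subsetP => i iF'; rewrite inE; apply/negP => iF.
      have : i \in F :&: F' by rewrite inE iF iF'.
      by rewrite I0 inE.
    have CF0 : ~: F != set0.
      case/set0Pn: F'0 => i iF'; apply/set0Pn; exists i; exact: (subsetP F'C).
    have [h1 h2] := two_face HF F0 CF0 (subxx F) (introT orP (or_intror F'C)).
    by have := H _ h1 h2.
  split => //; apply/eqP; apply/negP => NU.
  have CA0 : ~: (F :|: F') != set0.
    apply/negP => /eqP C0; move: NU; by rewrite -[F :|: F']setCK C0 setC0 eqxx.
  have A0 : F :|: F' != set0.
    case/set0Pn: F0 => i iF; apply/set0Pn; exists i; by rewrite inE iF.
  have [h1 h2] := two_face HF A0 CA0 (subsetUl F F') (introT orP (or_introl (subsetUr F F'))).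
  by have := H _ h1 h2.
move=> [U I] P H1 H2.
have [[Hne Hc] [B BP FB]] := face_block H1; have [_ [B' BP' FB']] := face_block H2.
case/set0Pn: I => k; rewrite inE => /andP [kF kF'].
have kB := subsetP FB k kF; have kB' := subsetP FB' k kF'.
move: Hc Hne BP'; case/splitPr: BP => p1 p2 Hc Hne BP'.
have Hk := Hc k; rewrite count_cat /= kB /= in Hk.
move/eqP: Hk; rewrite addnCA add1n eqSS addn_eq0 => /andP [/eqP c1 /eqP c2].
have BB : B' = B.
  move: BP'; rewrite mem_cat inE => /orP [h | /orP [/eqP -> // | h]].
    by move: (has_in h kB'); rewrite c1.
  by move: (has_in h kB'); rewrite c2.
have allB : forall j, j \in B.
  move=> j; have : j \in F :|: F' by rewrite U inE.
  by rewrite inE => /orP [jF | jF']; [apply: (subsetP FB) | rewrite -BB; apply: (subsetP FB')].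
have e1 : p1 = [::].
  case: p1 Hc Hne {c1 BP'} => [//|C p1'] Hc Hne.
  have /set0Pn [j jC] := Hne C (mem_head _ _).
  have := Hc j; rewrite count_cat /= jC allB /=.
  lia.
have e2 : p2 = [::].
  case: p2 Hc Hne {c2 BP' e1} => [//|C p2'] Hc Hne.
  have /set0Pn [j jC] : C != set0 by apply: Hne; rewrite mem_cat !inE eqxx !orbT.
  have := Hc j; rewrite count_cat /= jC allB /=.
  lia.
by rewrite e1 e2.
Qed.

Lemma ord_nth_eq n m (C : {set 'I_n}) f0 (l j : 'I_m) : #|C| = m ->
  (nth f0 (enum C) l == nth f0 (enum C) j) = (l == j).
Proof.
move=> Cm; rewrite nth_uniq ?enum_uniq // -cardE Cm //.
Qed.

Lemma case_int n (F F' : {set 'I_n}) f0 : f0 \in F -> F :&: F' != set0 ->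
 homeomorphic (fun x => coxeter_sphere x /\ (\sum_i x i = 0 /\ constOn F x /\ constOn F' x))
   (unit_sphere (n - #|F :|: F'|)).
Proof.
move=> f0F I.
set G := F :|: F'; set C := ~: G; set m := (n - #|G|)%N; set cs := enum C.
have Cm : #|C| = m by have := cardsC G; rewrite card_ord /m /C; lia.
have szcs : size cs = m by rewrite /cs -cardE.
have f0G : f0 \in G by rewrite /G inE f0F.
have f0C : f0 \notin C by rewrite /C inE f0G.
have g0 : #|G|%:R != 0 :> R.
  by rewrite pnatr_eq0 -lt0n; apply/card_gt0P; exists f0.
have CG : forall i, (i \in C) = (i \notin G) by move=> i; rewrite /C inE.
have constG : forall x, constOn F x -> constOn F' x -> constOn G x.
  case/set0Pn: I => k; rewrite inE => /andP [kF kF'] x c1 c2.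
  have H : forall i, i \in G -> x i = x k.
    by move=> i; rewrite /G inE => /orP [iF | iF']; [apply: c1 | apply: c2].
  by move=> i j iG jG; rewrite (H i iG) (H j jG).
pose phi := fun (x : 'I_n -> R) (j : 'I_m) => x (nth f0 cs j).
pose S := fun y : 'I_m -> R => \sum_(l < m) (if nth f0 cs l \in C then y l else 0).
pose psi := fun (y : 'I_m -> R) (i : 'I_n) =>
  if i \in C then \sum_(l < m) (if nth f0 cs l == i then y l else 0)
  else - S y / #|G|%:R.
apply: (homeo_gen (phi := phi) (psi := psi)).
- move=> x c [s0 [c1 c2]]; split; first by rewrite -mulr_sumr s0 mulr0.
  by split => i j iS jS; [rewrite (c1 i j) | rewrite (c2 i j)].
- by move=> x [].
- by [].
- move=> c y; apply: functional_extensionality => i; rewrite /psi.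
  case: ifP => _; first by rewrite sum_scale.
  rewrite /S sum_scale; ring.
- move=> x [s0 [c1 c2]]; apply: functional_extensionality => i; rewrite /psi /phi.
  case: ifP => iC.
    have ic : (index i cs < m)%N by rewrite -szcs index_mem /cs mem_enum.
    pose l0 : 'I_m := Ordinal ic.
    have il0 : nth f0 cs l0 = i by rewrite nth_index // /cs mem_enum.
    rewrite -[in RHS]il0 -(sum_delta l0 (fun l => x (nth f0 cs l))).
    by apply: eq_bigr => l _; rewrite -{1}il0 ord_nth_eq.
  have iG : i \in G by rewrite -[_ \in G]negbK -CG iC.
  rewrite /S (sum_enum (fun j => x j) f0C) ?Cm //.
  have E : \sum_j x j = \sum_(j in C) x j + x i *+ #|G|.
    rewrite [\sum_(j in C) _]big_mkcond -sum_in -big_split; apply: eq_bigr => j _.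
    case: ifP => jC /=; first by rewrite CG in jC; rewrite (negbTE jC) addr0.
    have jG : j \in G by rewrite -[_ \in G]negbK -CG jC.
    by rewrite jG add0r (constG x c1 c2 j i jG iG).
  rewrite E -[x i *+ _]mulr_natr in s0.
  have -> : \sum_(j in C) x j = - (x i * #|G|%:R) by apply/eqP; rewrite -addr_eq0; apply/eqP.
  by field.
- move=> y; apply: functional_extensionality => j; rewrite /phi /psi.
  have jC : nth f0 cs j \in C by rewrite -(mem_enum C) mem_nth // szcs.
  rewrite jC -(sum_delta j y); apply: eq_bigr => l _; by rewrite ord_nth_eq.
- move=> y.
  have Hs : \sum_i psi y i = 0.
    rewrite /psi.
    have -> : \sum_i (if i \in C then \sum_(l < m) (if nth f0 cs l == i then y l else 0)
                       else - S y / #|G|%:R) =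
              \sum_i ((if i \in C then \sum_(l < m) (if nth f0 cs l == i then y l else 0) else 0)
                       + (if i \in G then - S y / #|G|%:R else 0)).
      by apply: eq_bigr => i _; rewrite CG; case: (i \in G) => /=; rewrite ?addr0 ?add0r.
    rewrite big_split /= sum_exch sum_in -/(S y) -mulr_natr.
    by field.
  split => //.
  have ps : forall i, i \in G -> psi y i = - S y / #|G|%:R.
    by move=> i iG; rewrite /psi CG iG.
  by split => i j iF jF; (transitivity (- S y / #|G|%:R); [apply: ps | symmetry; apply: ps]); rewrite /G inE ?iF ?jF ?orbT.
- by move=> j A; apply: ccont_coord.
- move=> i B; case iC: (i \in C).
    apply: (ccont_ext (h1 := fun y => \sum_(l < m) (if nth f0 cs l == i then y l else 0))).
      by move=> y; rewrite /psi iC.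
    exact: ccont_sumif.
  apply: (ccont_ext (h1 := fun y => (- (#|G|%:R)^-1) * S y)).
    by move=> y; rewrite /psi iC; ring.
  by apply: ccont_scale; apply: ccont_sumif.
Qed.

Lemma case_disj n (F F' : {set 'I_n}) f0 f0' : f0 \in F -> f0' \in F' -> F :&: F' = set0 ->
 homeomorphic (fun x => coxeter_sphere x /\ (\sum_i x i = 0 /\ constOn F x /\ constOn F' x))
   (unit_sphere (n - #|F| - #|F'| + 1)).
Proof.
move=> f0F f0F' I0.
set G := F :|: F'; set C := ~: G; set k := #|C|; set m := (n - #|F| - #|F'| + 1)%N.
set cs := enum C.
have cG : #|G| = (#|F| + #|F'|)%N by rewrite /G cardsU I0 cards0 subn0.
have Cm : m = k.+1 by have := cardsC G; rewrite card_ord /m /k /C cG; lia.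
have szcs : size cs = k by rewrite /cs -cardE.
have f0G : f0 \in G by rewrite /G inE f0F.
have f0C : f0 \notin C by rewrite /C inE f0G.
have CG : forall i, (i \in C) = (i \notin G) by move=> i; rewrite /C inE.
have disj : forall i, i \in F' -> i \notin F.
  move=> i iF'; apply/negP => iF.
  have : i \in F :&: F' by rewrite inE iF iF'.
  by rewrite I0 inE.
have fF : #|F|%:R != 0 :> R by rewrite pnatr_eq0 -lt0n; apply/card_gt0P; exists f0.
have fF' : #|F'|%:R != 0 :> R by rewrite pnatr_eq0 -lt0n; apply/card_gt0P; exists f0'.
have nthC : forall l : 'I_m, (nth f0 cs l \in C) = (l < k)%N.
  move=> l; case: (ltnP l k) => lk.
    by rewrite -(mem_enum C) mem_nth // szcs.
  by rewrite nth_default ?szcs // (negbTE f0C).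
have ltm : forall l : 'I_m, (l < k.+1)%N by move=> l; rewrite -Cm ltn_ord.
have nthf0 : forall l : 'I_m, (nth f0 cs l == f0) = (k <= l)%N.
  move=> l; case: (ltnP l k) => lk.
    apply/negbTE/eqP => E; move: f0C; rewrite -E -(mem_enum C) mem_nth // szcs //.
  by rewrite nth_default ?szcs // eqxx.
have nthE : forall l j : 'I_m, (j < k)%N -> (nth f0 cs l == nth f0 cs j) = (l == j).
  move=> l j jk; case: (ltnP l k) => lk.
    by rewrite nth_uniq ?enum_uniq ?szcs.
  have -> : (l == j) = false by apply/negbTE/eqP => E; move: lk; rewrite E leqNgt jk.
  rewrite [nth f0 cs l]nth_default ?szcs //.
  apply/negbTE/eqP => E; move: f0C; rewrite E -(mem_enum C) mem_nth // szcs //.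
have km : (k < m)%N by rewrite Cm.
pose lk : 'I_m := Ordinal km.
have nthf0' : forall l : 'I_m, (nth f0 cs l == f0) = (l == lk).
  move=> l; rewrite nthf0; apply/idP/eqP => [h | ->] //.
  by apply/val_inj => /=; have := ltm l; lia.
have clk : nth f0 cs lk = f0 by rewrite nth_default ?szcs.
pose phi := fun (x : 'I_n -> R) (j : 'I_m) => x (nth f0 cs j).
pose yl := fun y : 'I_m -> R => \sum_(l < m) (if nth f0 cs l == f0 then y l else 0).
pose S := fun y : 'I_m -> R => \sum_(l < m) (if nth f0 cs l \in C then y l else 0).
pose b := fun y : 'I_m -> R => - (#|F|%:R * yl y + S y) / #|F'|%:R.
pose psi := fun (y : 'I_m -> R) (i : 'I_n) =>
  if i \in C then \sum_(l < m) (if nth f0 cs l == i then y l else 0)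
  else if i \in F then yl y else b y.
have ylE : forall y, yl y = y lk.
  move=> y; rewrite /yl -(sum_delta lk y); apply: eq_bigr => l _; by rewrite nthf0'.
apply: (homeo_gen (phi := phi) (psi := psi)).
- move=> x c [s0 [c1 c2]]; split; first by rewrite -mulr_sumr s0 mulr0.
  by split => i j iS jS; [rewrite (c1 i j) | rewrite (c2 i j)].
- by move=> x [].
- by [].
- move=> c y; apply: functional_extensionality => i; rewrite /psi.
  case: ifP => _; first by rewrite sum_scale.
  case: ifP => _; first by rewrite /yl sum_scale.
  rewrite /b /yl /S !sum_scale; ring.
- move=> x [s0 [c1 c2]]; apply: functional_extensionality => i; rewrite /psi /phi.
  have ylx : yl (fun j => x (nth f0 cs j)) = x f0 by rewrite ylE clk.
  case: ifP => iC.
    have ic : (index i cs < m)%N.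
      by rewrite Cm ltnS ltnW // -szcs index_mem /cs mem_enum.
    pose l0 : 'I_m := Ordinal ic.
    have il0 : nth f0 cs l0 = i by rewrite nth_index // /cs mem_enum.
    have l0k : (l0 < k)%N by rewrite /= -szcs index_mem /cs mem_enum.
    rewrite -[in RHS]il0 -(sum_delta l0 (fun l => x (nth f0 cs l))).
    by apply: eq_bigr => l _; rewrite -{1}il0 nthE.
  case: ifP => iF; first by rewrite ylx (c1 f0 i).
  have iG : i \in G by rewrite -[_ \in G]negbK -CG iC.
  have iF' : i \in F' by move: iG; rewrite /G inE iF.
  rewrite /b ylx /S (sum_enum (fun j => x j) f0C) ?Cm //.
  have E : \sum_j x j = \sum_(j in C) x j + x f0 *+ #|F| + x i *+ #|F'|.
    rewrite [\sum_(j in C) _]big_mkcond -!sum_in -!big_split; apply: eq_bigr => j _ /=.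
    case: ifP => jC /=.
      have jG : j \notin G by rewrite -CG.
      move: jG; rewrite /G inE negb_or => /andP [/negbTE -> /negbTE ->]; by rewrite !addr0.
    have jG : j \in G by rewrite -[_ \in G]negbK -CG jC.
    case: ifP => jF.
      have jF' : (j \in F') = false by apply/negP => /disj; rewrite jF.
      by rewrite jF' addr0 add0r (c1 j f0).
    have jF' : j \in F' by move: jG; rewrite /G inE jF.
    by rewrite jF' !add0r (c2 j i).
  rewrite E -[x f0 *+ _]mulr_natr -[x i *+ _]mulr_natr in s0.
  have -> : \sum_(j in C) x j = - (x f0 * #|F|%:R + x i * #|F'|%:R).
    by apply/eqP; rewrite -addr_eq0 addrA; apply/eqP.
  by field.
- move=> y; apply: functional_extensionality => j; rewrite /phi /psi.
  case: (ltnP j k) => jk.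
    have jC : nth f0 cs j \in C by rewrite nthC.
    rewrite jC -(sum_delta j y); apply: eq_bigr => l _; by rewrite nthE.
  have jE : j = lk by apply/val_inj => /=; have := ltm j; lia.
  by rewrite jE clk (negbTE f0C) f0F ylE.
- move=> y.
  have Hs : \sum_i psi y i = 0.
    have -> : \sum_i psi y i =
              \sum_i ((if i \in C then \sum_(l < m) (if nth f0 cs l == i then y l else 0) else 0)
                       + (if i \in F then yl y else 0) + (if i \in F' then b y else 0)).
      apply: eq_bigr => i _; rewrite /psi.
      case: ifP => iC /=.
        have iG : i \notin G by rewrite -CG.
        move: iG; rewrite /G inE negb_or => /andP [/negbTE -> /negbTE ->]; by rewrite !addr0.
      have iG : i \in G by rewrite -[_ \in G]negbK -CG iC.
      case: ifP => iF.
        have iF' : (i \in F') = false by apply/negP => /disj; rewrite iF.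
        by rewrite iF' add0r addr0.
      have iF' : i \in F' by move: iG; rewrite /G inE iF.
      by rewrite iF' !add0r.
    rewrite !big_split /= sum_exch !sum_in -/(S y) -[yl y *+ _]mulr_natr -[b y *+ _]mulr_natr.
    rewrite /b; by field.
  split => //.
  split => i j iS jS.
    have iC : i \notin C by rewrite CG negbK /G inE iS.
    have jC : j \notin C by rewrite CG negbK /G inE jS.
    by rewrite /psi (negbTE iC) (negbTE jC) iS jS.
  have iC : i \notin C by rewrite CG negbK /G inE iS orbT.
  have jC : j \notin C by rewrite CG negbK /G inE jS orbT.
  by rewrite /psi (negbTE iC) (negbTE jC) (negbTE (disj i iS)) (negbTE (disj j jS)).
- by move=> j A; apply: ccont_coord.
- move=> i B; case iC: (i \in C).
    apply: (ccont_ext (h1 := fun y => \sum_(l < m) (if nth f0 cs l == i then y l else 0))).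
      by move=> y; rewrite /psi iC.
    exact: ccont_sumif.
  case iF: (i \in F).
    apply: (ccont_ext (h1 := yl)); first by move=> y; rewrite /psi iC iF.
    exact: ccont_sumif.
  apply: (ccont_ext (h1 := fun y => (- (#|F'|%:R)^-1 * #|F|%:R) * yl y + (- (#|F'|%:R)^-1) * S y)).
    by move=> y; rewrite /psi iC iF /b; ring.
  by apply: ccont_add; apply: ccont_scale; apply: ccont_sumif.
Qed.

Local Close Scope ring_scope.

Theorem mainTheorem12 (n : nat) (E : {set {set 'I_n}}) (HE : is_hypergraph E)
  (F F' : {set 'I_n}) (HF : F \in E) (HF' : F' \in E) (Hne : F != F') :
  [/\ (F :&: F' = set0 ->
         homeomorphic
           (realization (fun P => edge_sphere_face E F P /\ edge_sphere_face E F' P))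
           (unit_sphere (n - #|F| - #|F'| + 1)%N)),
      (F :&: F' != set0 ->
         homeomorphic
           (realization (fun P => edge_sphere_face E F P /\ edge_sphere_face E F' P))
           (unit_sphere (n - #|F :|: F'|)%N)) &
      ((forall P, edge_sphere_face E F P -> edge_sphere_face E F' P -> size P = 1%N)
         <-> (F :|: F' = setT /\ F :&: F' != set0))].
Proof.
have [H1 _ _ _] := HE.
have F0 := H1 F HF; have F'0 := H1 F' HF'.
case/set0Pn: (F0) => f0 f0F; case/set0Pn: (F'0) => f0' f0F'.
split.
- move=> I0; apply: (homeo_ext _ (case_disj f0F f0F' I0)).
  by move=> x; exact: (@real_char _ E F F' f0 f0' x HF HF' f0F f0F').
- move=> I; apply: (homeo_ext _ (case_int f0F I)).
  by move=> x; exact: (@real_char _ E F F' f0 f0' x HF HF' f0F f0F').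
- exact: part3.
Qed.
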